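(* Let $\mathbb{F}$ be an infinite field and $n\ge2$. Then any two $2$-maximal nilpotent subsemigroups of $M(n,\mathbb{F})$ are isomorphic as semigroups.
   Context: $M(n,\mathbb{F})$ is the semigroup of $n\times n$ matrices over $\mathbb{F}$ under multiplication. A semigroup $S$ with zero is nilpotent of nilpotency degree $k$ if all products of $k$ elements of $S$ equal $0$ and some product of $k-1$ elements is nonzero. A nilpotent subsemigroup of $M(n,\mathbb{F})$ of nilpotency degree $k$ is $k$-maximal if it is not properly contained in another nilpotent subsemigroup of $M(n,\mathbb{F})$ of nilpotency degree $k$. *)

(* Defs.v *)
From mathcomp Require Import all_boot all_order all_algebra.
Set Implicit Arguments. Unset Strict Implicit. Unset Printing Implicit Defensive.
Import GRing.Theory.
Local Open Scope ring_scope.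

Definition infinite_type (T : eqType) : Prop :=
  forall s : seq T, exists x : T, x \notin s.

Definition mxprod (F : fieldType) (n : nat) (s : seq 'M[F]_n) : 'M[F]_n :=
  foldr (fun a b => a *m b) 1%:M s.

Definition subsemigroup0 (F : fieldType) (n : nat) (S : 'M[F]_n -> Prop) : Prop :=
  S 0 /\ (forall a b, S a -> S b -> S (a *m b)).

Definition nilpotent_subsemigroup (F : fieldType) (n k : nat)
    (S : 'M[F]_n -> Prop) : Prop :=
  subsemigroup0 S /\
  (forall s : seq 'M[F]_n, size s = k -> (forall a, a \in s -> S a) ->
     mxprod s = 0) /\
  (exists s : seq 'M[F]_n, [/\ size s = k.-1, (forall a, a \in s -> S a) &
     mxprod s != 0]).

Definition k_maximal (F : fieldType) (n k : nat) (S : 'M[F]_n -> Prop) : Prop :=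
  nilpotent_subsemigroup k S /\
  (forall T : 'M[F]_n -> Prop, nilpotent_subsemigroup k T ->
     (forall a, S a -> T a) -> (forall a, T a -> S a)).

Definition semigroup_isomorphic (F : fieldType) (n : nat)
    (S T : 'M[F]_n -> Prop) : Prop :=
  exists f : 'M[F]_n -> 'M[F]_n,
    [/\ (forall a, S a -> T (f a)),
        (forall a b, S a -> S b -> f a = f b -> a = b),
        (forall c, T c -> exists2 a, S a & f a = c) &
        (forall a b, S a -> S b -> f (a *m b) = f a *m f b)].

(* Main.v *)
From HB Require Import structures.
Require Import Defs.
From mathcomp Require Import all_boot all_order all_algebra.
From mathcomp Require Import boolp classical_sets functions cardinality.
Set Implicit Arguments. Unset Strict Implicit. Unset Printing Implicit Defensive.
Local Open Scope classical_set_scope.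

Definition injon T U (A : set T) (B : set U) :=
  exists f : T -> U, (forall x, A x -> B (f x)) /\
    (forall x y, A x -> A y -> f x = f y -> x = y).
Definition bijon T U (A : set T) (B : set U) :=
  exists f : T -> U, [/\ (forall x, A x -> B (f x)),
    (forall x y, A x -> A y -> f x = f y -> x = y) &
    (forall y, B y -> exists2 x, A x & f x = y)].

Lemma injon_le T U (u0 : U) (A : set T) (B : set U) : injon A B -> (A #<= B)%card.
Proof.
elim/Ppointed: U => U in u0 B *; first by case: (no u0).
move=> [f [fAB finj]]; apply/pcard_leP; apply/injfunPex; exists f.
  by move=> x Ax; apply: fAB.
by move=> x y; rewrite !inE => Ax Ay; apply: finj.
Qed.

Lemma CB T U (u0 : U) (A : set T) (B : set U) : injon A B -> injon B A -> bijon A B.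
Proof.
move=> h1 h2.
have hh := Cantor_Bernstein (injon_le u0 h1).
have h2c := h2; case: h2c => g [gBA _].
elim/Ppointed: U => U in u0 B h1 h2 g gBA hh *; first by case: (no u0).
have /card_set_bijP[f [fAB finj fsurj]] := hh (injon_le (g u0) h2).
exists f; split.
- by move=> x Ax; apply: fAB.
- by move=> x y Ax Ay; apply: finj; rewrite inE.
- by move=> y /fsurj[x Ax <-]; exists x.
Qed.

Lemma choose_fun T U (u0 : U) (A : set T) (R : T -> U -> Prop) :
  (forall x, A x -> exists y, R x y) -> exists f : T -> U, forall x, A x -> R x (f x).
Proof.
move=> h.
have h' : forall x, exists y, A x -> R x y.
  move=> x; have [Ax|nAx] := pselect (A x).
    by have [y Ry] := h x Ax; exists y.
  by exists u0.
have [f hf] := choice h'; by exists f.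
Qed.

Lemma compar T U (t0 : T) (u0 : U) (A : set T) (B : set U) : injon A B \/ injon B A.
Proof.
pose P := fun R : set (T * U) => [/\ (forall p, R p -> A p.1 /\ B p.2),
  (forall x y y', R (x, y) -> R (x, y') -> y = y') &
  (forall x x' y, R (x, y) -> R (x', y) -> x = x')].
have [R0 [[R0AB R0f R0i] R0max]] : exists R, P R /\ forall R', R `<` R' -> ~ P R'.
  apply: Zorn_bigcup => Fm FP Ftot; split.
  - by move=> p [X FX Xp]; have [h _ _] := FP _ FX; apply: h.
  - move=> x y y' [X FX Xp] [Y FY Yp].
    have [XY|YX] := Ftot _ _ FX FY.
      by have [_ h _] := FP _ FY; apply: h (XY _ Xp) Yp.
    by have [_ h _] := FP _ FX; apply: h Xp (YX _ Yp).
  - move=> x x' y [X FX Xp] [Y FY Yp].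
    have [XY|YX] := Ftot _ _ FX FY.
      by have [_ _ h] := FP _ FY; apply: h (XY _ Xp) Yp.
    by have [_ _ h] := FP _ FX; apply: h Xp (YX _ Yp).
have [hA|hA] := pselect (forall a, A a -> exists y, R0 (a, y)).
  left; have [f hf] := choose_fun u0 hA; exists f; split.
    by move=> x Ax; have [] := R0AB _ (hf x Ax).
  by move=> x y Ax Ay fxy; apply: (R0i x y (f x)) (hf x Ax) _; rewrite fxy; apply: hf.
have [hB|hB] := pselect (forall b, B b -> exists x, R0 (x, b)).
  right; have [g hg] := choose_fun t0 hB; exists g; split.
    by move=> x Bx; have [] := R0AB _ (hg x Bx).
  by move=> x y Bx By gxy; apply: (R0f (g x) x y) (hg x Bx) _; rewrite gxy; apply: hg.
exfalso.
move/existsNP: hA => [a /not_implyP [Aa /forallNP na]].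
move/existsNP: hB => [b /not_implyP [Bb /forallNP nb]].
apply: (R0max (R0 `|` [set (a, b)])).
  split; first by move=> p R0p; left.
  by move=> /(_ (a, b) (or_intror erefl)) /na.
split.
- by move=> p [/R0AB //|->].
- move=> x y y' [h1|e1] [h2|e2].
  + exact: R0f h1 h2.
  + by case: e2 => ??; subst; exfalso; apply: (na y).
  + by case: e1 => ??; subst; exfalso; apply: (na y').
  + by case: e1 => ??; case: e2 => ??; subst.
- move=> x x' y [h1|e1] [h2|e2].
  + exact: R0i h1 h2.
  + by case: e2 => ??; subst; exfalso; apply: (nb x).
  + by case: e1 => ??; subst; exfalso; apply: (nb x').
  + by case: e1 => ??; case: e2 => ??; subst.
Qed.

Section Sq.
Variable X : Type.
Implicit Types G : set ((X * X) * X).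

Definition rg G : set X := fun z => exists p, G (p, z).

Definition good G := [/\ (forall a b z, G ((a, b), z) -> rg G a /\ rg G b),
  (forall a b, rg G a -> rg G b -> exists z, G ((a, b), z)),
  (forall p z z', G (p, z) -> G (p, z') -> z = z'),
  (forall p p' z, G (p, z) -> G (p', z) -> p = p') &
  (rg G = set0 \/ exists a0 a1 a2, [/\ rg G a0, rg G a1, rg G a2 &
      [/\ a0 <> a1, a0 <> a2 & a1 <> a2]])].

Lemma good_union (Fm : set (set ((X * X) * X))) :
  Fm `<=` good -> total_on Fm subset -> good (\bigcup_(G in Fm) G).
Proof.
move=> FP Ftot.
have rgU z : rg (\bigcup_(G in Fm) G) z <-> exists2 G, Fm G & rg G z.
  split; first by move=> [p [G FG Gp]]; exists G => //; exists p.
  by move=> [G FG [p Gp]]; exists p; exists G.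
split.
- move=> a b z [G FG Gt]; have [h _ _ _ _] := FP _ FG.
  by have [ha hb] := h _ _ _ Gt; split; apply/rgU; exists G.
- move=> a b /rgU[G1 FG1 r1] /rgU[G2 FG2 r2].
  have [s12|s21] := Ftot _ _ FG1 FG2.
    have [_ h _ _ _] := FP _ FG2.
    have r1' : rg G2 a by case: r1 => p Gp; exists p; apply: s12.
    by have [z Gz] := h _ _ r1' r2; exists z; exists G2.
  have [_ h _ _ _] := FP _ FG1.
  have r2' : rg G1 b by case: r2 => p Gp; exists p; apply: s21.
  by have [z Gz] := h _ _ r1 r2'; exists z; exists G1.
- move=> p z z' [G1 FG1 h1] [G2 FG2 h2].
  have [s12|s21] := Ftot _ _ FG1 FG2.
    by have [_ _ h _ _] := FP _ FG2; apply: h (s12 _ h1) h2.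
  by have [_ _ h _ _] := FP _ FG1; apply: h h1 (s21 _ h2).
- move=> p p' z [G1 FG1 h1] [G2 FG2 h2].
  have [s12|s21] := Ftot _ _ FG1 FG2.
    by have [_ _ _ h _] := FP _ FG2; apply: h (s12 _ h1) h2.
  by have [_ _ _ h _] := FP _ FG1; apply: h h1 (s21 _ h2).
- have [[G [FG [a0 [a1 [a2 [r0 r1 r2 nn]]]]]]|nex] := pselect (exists G, Fm G /\
    exists a0 a1 a2, [/\ rg G a0, rg G a1, rg G a2 & [/\ a0 <> a1, a0 <> a2 & a1 <> a2]]).
    right; exists a0, a1, a2; split => //; apply/rgU; by exists G.
  left; apply/seteqP; split => // z /rgU[G FG rz].
  have [_ _ _ _ [e0|ex]] := FP _ FG.
    by move: rz; rewrite e0.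
  by exfalso; apply: nex; exists G.
Qed.

End Sq.
Arguments rg {X}.
Arguments good {X}.

Lemma nat_pair : exists p : nat * nat -> nat, injective p /\ forall n, exists q, p q = n.
Proof.
have /card_set_bijP[p [_ pinj psurj]] := card_nat2.
exists p; split; first by move=> x y; apply: pinj; rewrite inE.
by move=> n; have [q _ <-] := psurj n I; exists q.
Qed.

Theorem sq_inj (X : Type) (e : nat -> X) : injective e ->
  exists h : X * X -> X, injective h.
Proof.
move=> einj.
have [G0 [gG0 G0max]] : exists G : set ((X * X) * X), good G /\ forall G', G `<` G' -> ~ good G'.
  exact: (@Zorn_bigcup _ (@good X) (@good_union X)).
have [G1 G2 G3 G4 G5] := gG0.
have [A0|[a0 [a1 [a2 [r0 r1 r2 [n01 n02 n12]]]]]] := G5.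
  exfalso.
  have [p [pinj psurj]] := nat_pair.
  pose H : set ((X * X) * X) := fun t => exists i j, t = ((e i, e j), e (p (i, j))).
  have rgH z : rg H z <-> exists n, z = e n.
    split; first by move=> [q [i [j [_ ->]]]]; exists (p (i, j)).
    move=> [n ->]; have [[i j] <-] := psurj n; by exists (e i, e j), i, j.
  have nG0 t : ~ G0 t.
    case: t => q z G0t; have : rg G0 z by exists q.
    by rewrite A0.
  apply: (G0max H).
    split; first by move=> t /nG0.
    by move=> /(_ ((e 0, e 0), e (p (0, 0))))/(_ (ex_intro _ 0 (ex_intro _ 0 erefl)))/nG0.
  have eH i j : H ((e i, e j), e (p (i, j))) by exists i, j.
  split.
  - by move=> a b z [i [j [-> -> _]]]; split; apply/rgH; [exists i|exists j].
  - move=> a b /rgH[i ->] /rgH[j ->]; by exists (e (p (i, j))).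
  - move=> q z z' [i [j [-> ->]]] [i' [j' []]] /einj <- /einj <- ->; done.
  - move=> q q' z [i [j [-> ->]]] [i' [j' [-> /einj/pinj []]]] <- <-; done.
  - right; exists (e 0), (e 1), (e 2); split; try by apply/rgH; eexists.
    by split => /einj.
have G2' : forall q, rg G0 q.1 /\ rg G0 q.2 -> exists z, G0 (q, z).
  by move=> [a b] [h1 h2]; apply: G2.
have [g hg] := @choose_fun _ _ a0 (fun q => rg G0 q.1 /\ rg G0 q.2)
   (fun q z => G0 (q, z)) G2'.
have gA a b : rg G0 a -> rg G0 b -> rg G0 (g (a, b)).
  by move=> ha hb; exists (a, b); apply: (hg (a, b)).
have ginj a b a' b' : rg G0 a -> rg G0 b -> rg G0 a' -> rg G0 b' ->
    g (a, b) = g (a', b') -> (a, b) = (a', b').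
  move=> ha hb ha' hb' E; apply: (G4 _ _ (g (a, b))); first exact: (hg (a, b)).
  by rewrite E; apply: (hg (a', b')).
have [[k [kD kinj]]|[d [dA dinj]]] := compar a0 a0 (rg G0) (~` rg G0); last first.
  pose j x := if pselect (rg G0 x) then g (x, a0) else g (d x, a1).
  have jA x : rg G0 (j x).
    by rewrite /j; case: pselect => Ax; apply: gA => //; apply: dA.
  have jinj : injective j.
    move=> x y; rewrite /j; case: pselect => Ax; case: pselect => Ay.
    - by move/ginj => /(_ Ax r0 Ay r0) [].
    - by move/ginj => /(_ Ax r0 (dA _ Ay) r1) [] _ E; case: n01; rewrite E.
    - by move/ginj => /(_ (dA _ Ax) r1 Ay r0) [] _ E; case: n01; rewrite E.
    - by move/ginj => /(_ (dA _ Ax) r1 (dA _ Ay) r1) [] /dinj; apply.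
  exists (fun q => g (j q.1, j q.2)) => [[x y] [x' y']] /=.
  by move/ginj => /(_ (jA _) (jA _) (jA _) (jA _)) [] /jinj -> /jinj ->.
exfalso.
pose B := fun x => exists2 a, rg G0 a & k a = x.
have BnA x : B x -> ~ rg G0 x by move=> [a ra <-]; apply: kD.
have [ki hki] := @choose_fun _ _ a0 B (fun x a => rg G0 a /\ k a = x)
  (fun x '(ex_intro2 a ra ka) => ex_intro _ a (conj ra ka)).
pose pre x := if pselect (rg G0 x) then x else ki x.
pose enc x := g (if pselect (rg G0 x) then a0 else a1, pre x).
have preA x : rg G0 x \/ B x -> rg G0 (pre x).
  rewrite /pre; case: pselect => // Ax [//|Bx]; by case: (hki _ Bx).
have encA x : rg G0 x \/ B x -> rg G0 (enc x).
  move=> h; apply: gA; last exact: preA.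
  by case: pselect.
have encinj x y : rg G0 x \/ B x -> rg G0 y \/ B y -> enc x = enc y -> x = y.
  move=> hx hy; rewrite /enc.
  move/ginj => /(_ _ (preA _ hx) _ (preA _ hy)).
  move: (preA _ hx) (preA _ hy); rewrite /pre.
  case: pselect => Ax; case: pselect => Ay Px Py.
  - by move=> /(_ r0 r0) [].
  - by move=> /(_ r0 r1) [] E; case: n01; rewrite E.
  - by move=> /(_ r1 r0) [] E; case: n01; rewrite E.
  - move=> /(_ r1 r1) [] E.
    have Bx : B x by case: hx.
    have By : B y by case: hy.
    by case: (hki _ Bx) => _ <-; case: (hki _ By) => _ <-; rewrite E.
pose Q := fun q : X * X => [/\ rg G0 q.1 \/ B q.1, rg G0 q.2 \/ B q.2 &
  ~ (rg G0 q.1 /\ rg G0 q.2)].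
have [h [hQB hinj hsurj]] : bijon Q B.
  apply: (CB a0).
    exists (fun q => k (g (enc q.1, enc q.2))); split.
      move=> [x y] [hx hy _] /=; exists (g (enc x, enc y)) => //.
      by apply: gA; apply: encA.
    move=> [x y] [x' y'] [hx hy _] [hx' hy' _] /= /kinj.
    move=> /(_ (gA _ _ (encA _ hx) (encA _ hy)) (gA _ _ (encA _ hx') (encA _ hy'))).
    move/ginj => /(_ (encA _ hx) (encA _ hy) (encA _ hx') (encA _ hy')) [].
    by move=> /encinj -> // /encinj ->.
  exists (fun b => (b, b)); split.
    by move=> b Bb; split => /=; [right|right|move=> [/(BnA _ Bb)]].
  by move=> x y _ _ [].
pose H := fun t : (X * X) * X => Q t.1 /\ t.2 = h t.1.
pose G' := G0 `|` H.
have rgG' z : rg G' z <-> rg G0 z \/ B z.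
  split.
    move=> [q [G0q|[Qq /= ->]]]; first by left; exists q.
    by right; apply: hQB.
  move=> [[q G0q]|Bz]; first by exists q; left.
  by have [q Qq <-] := hsurj _ Bz; exists q; right.
have G0H q z : G0 (q, z) -> ~ Q q.
  by case: q => a b /G1 [ra rb] [_ _]; apply.
apply: (G0max G').
  split; first by move=> t G0t; left.
  have Bk : B (k a0) by exists a0.
  have [q Qq hq] := hsurj _ Bk.
  move=> /(_ (q, k a0) (or_intror (conj Qq (esym hq)))) G0q.
  by apply: (BnA _ Bk); exists q.
split.
- move=> a b z [/G1 [ra rb]|[[ha hb _] _]]; split; apply/rgG'; by [left|].
- move=> a b /rgG' ha /rgG' hb.
  have [[ra rb]|nab] := pselect (rg G0 a /\ rg G0 b).
    by have [z Gz] := G2 _ _ ra rb; exists z; left.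
  by exists (h (a, b)); right; split.
- move=> q z z' [Gz|[Qz /= ->]] [Gz'|[Qz' /= ->]] //.
  + exact: G3 Gz Gz'.
  + by case: (G0H _ _ Gz).
  + by case: (G0H _ _ Gz').
- move=> q q' z [Gz|[Qz /= Ez]] [Gz'|[Qz' /= Ez']].
  + exact: G4 Gz Gz'.
  + by exfalso; apply: (BnA z); [rewrite Ez'; apply: hQB | exists q].
  + by exfalso; apply: (BnA z); [rewrite Ez; apply: hQB | exists q'].
  + by apply: hinj => //; rewrite -Ez -Ez'.
- right; exists a0, a1, a2; split => //; apply/rgG'; by left.
Qed.

Local Close Scope classical_set_scope.
Import GRing.Theory.
Local Open Scope ring_scope.

Section Inf.
Variable F : fieldType.
Hypothesis hinf : infinite_type F.

Let nxt (s : seq F) : F := xchoose (hinf s).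
Let nxtP s : nxt s \notin s. Proof. exact: (xchooseP (hinf s)). Qed.
Fixpoint Sq (n : nat) : seq F := if n is m.+1 then nxt (Sq m) :: Sq m else [::].
Let e n := nxt (Sq n).

Lemma Sq_mem i n : (i < n)%N -> e i \in Sq n.
Proof.
elim: n => // n IH; rewrite ltnS leq_eqVlt => /orP[/eqP ->|/IH h] /=.
  by rewrite inE eqxx.
by rewrite inE h orbT.
Qed.

Lemma e_neq i j : (j < i)%N -> e i <> e j.
Proof.
move=> lt E; have h1 := Sq_mem lt; have h2 : e i \notin Sq i by apply: nxtP.
by move: h2; rewrite E h1.
Qed.

Lemma e_inj : injective e.
Proof.
move=> i j eij; case: (ltngtP i j) => // lt.
  by case: (e_neq lt); rewrite eij.
by case: (e_neq lt).
Qed.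

Lemma F_nat : exists e : nat -> F, injective e.
Proof. by exists e; exact: e_inj. Qed.
End Inf.

Section Mx.
Variable F : fieldType.
Variable p : F * F -> F.
Hypothesis pinj : injective p.

Definition encl (s : seq F) : F := foldr (fun x acc => p (x, acc)) 0 s.

Lemma encl_inj s t : size s = size t -> encl s = encl t -> s = t.
Proof.
elim: s t => [|x s IH] [|y t] //= [] sz /pinj [-> E].
by rewrite (IH t sz E).
Qed.

Lemma mx_enc n : exists f : 'M[F]_n -> F, injective f.
Proof.
pose ml (A : 'M[F]_n) := [seq A ij.1 ij.2 | ij <- enum {: 'I_n * 'I_n}].
exists (fun A => encl (ml A)) => A B /encl_inj.
rewrite !size_map => /(_ erefl) /eq_in_map h.
apply/matrixP => i j; have := h (i, j); rewrite mem_enum; exact.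
Qed.
End Mx.

Lemma max_facts (F : fieldType) n (S : 'M[F]_n -> Prop) : k_maximal 2 S ->
  [/\ S 0, (forall a b, S a -> S b -> a *m b = 0), (exists2 a, S a & a != 0) &
      (forall c a, S a -> S (c *: a))].
Proof.
case => [[[S0 Smul] [Snil [s [sz sS snz]]]] Smax].
have null a b : S a -> S b -> a *m b = 0.
  move=> Sa Sb; have := Snil [:: a; b] erefl.
  rewrite /mxprod /= mulmx1; apply => x; rewrite !inE => /orP[/eqP->|/eqP->] //.
split => //.
  case: s sz sS snz => [|a [|]] // _ sS; rewrite /mxprod /= mulmx1 => anz.
  by exists a => //; apply: sS; rewrite inE.
pose T := fun x : 'M[F]_n => exists c a, S a /\ x = c *: a.
have ST a : S a -> T a by move=> Sa; exists 1, a; rewrite scale1r.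
have Tnull x y : T x -> T y -> x *m y = 0.
  move=> [c [a [Sa ->]]] [d [b [Sb ->]]].
  by rewrite -scalemxAl -scalemxAr null // !scaler0.
have T0 : T 0 by apply: ST.
move=> c a Sa; apply: (Smax T) => //; last by exists c, a.
split; first by split => // x y Tx Ty; rewrite Tnull.
split.
  move=> [|x [|y [|]]] // _ sT; rewrite /mxprod /= mulmx1.
  by apply: Tnull; apply: sT; rewrite !inE eqxx ?orbT.
by exists s; split => // x /sS; apply: ST.
Qed.

Lemma S_bij (F : fieldType) n (S : 'M[F]_n -> Prop) : infinite_type F ->
  k_maximal 2 S -> bijon S (fun _ : F => True).
Proof.
move=> hinf maxS.
have [e einj] := F_nat hinf.
have [p pinj] := sq_inj einj.
have [f finj] := mx_enc pinj n.
have [S0 Snull [a0 Sa0 a0nz] Sscale] := max_facts maxS.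
apply: (CB 0).
  by exists f; split => // x y _ _; apply: finj.
exists (fun c => c *: a0); split; first by move=> c _; apply: Sscale.
move=> c d _ _ E; apply/eqP; rewrite -subr_eq0.
have : (c - d) *: a0 == 0 by rewrite scalerBl E subrr.
by rewrite scaler_eq0 (negbTE a0nz) orbF.
Qed.

Lemma corollary11_aux (F : fieldType) (n : nat) :
  infinite_type F -> (2 <= n)%N ->
  forall S T : 'M[F]_n -> Prop,
    k_maximal 2 S -> k_maximal 2 T -> semigroup_isomorphic S T.
Proof.
move=> hinf _ S T maxS maxT.
have [hs [hsF hsinj hssurj]] := S_bij hinf maxS.
have [ht [_ htinj htsurj]] := S_bij hinf maxT.
have [S0 Snull _ _] := max_facts maxS.
have [T0 Tnull _ _] := max_facts maxT.
have [ti hti] := @choose_fun _ _ 0 (fun _ : F => True) (fun c a => T a /\ ht a = c)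
  (fun c _ => let: ex_intro2 a Ta E := htsurj c I in ex_intro _ a (conj Ta E)).
pose phi a := ti (hs a).
have phiT a : T (phi a) by case: (hti (hs a) I).
have phiinj a b : S a -> S b -> phi a = phi b -> a = b.
  move=> Sa Sb E; apply: hsinj => //.
  by case: (hti (hs a) I) => _ <-; case: (hti (hs b) I) => _ <-; move: E; rewrite /phi => ->.
have phisurj c : T c -> exists2 a, S a & phi a = c.
  move=> Tc; have [a Sa ha] : exists2 a, S a & hs a = ht c.
    exact: hssurj.
  exists a => //; apply: (htinj _ _ (phiT a) Tc).
  by case: (hti (hs a) I) => _ ->.
pose z := phi 0.
pose sg x := if x == 0 then z else if x == z then 0 else x.
have sgK x : sg (sg x) = x.
  rewrite /sg; case: (eqVneq x 0) => [->|x0].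
    by case: (eqVneq z 0) => [->|z0]; rewrite ?eqxx.
  case: (eqVneq x z) => [->|xz]; first by rewrite eqxx.
  by rewrite (negbTE x0) (negbTE xz).
have sgT x : T x -> T (sg x).
  by rewrite /sg => Tx; case: ifP => _; [apply: phiT|case: ifP].
exists (fun a => sg (phi a)); split.
- by move=> a Sa; apply/sgT/phiT.
- move=> a b Sa Sb E; apply: phiinj => //.
  by rewrite -(sgK (phi a)) E sgK.
- move=> c Tc; have [a Sa E] := phisurj _ (sgT _ Tc).
  by exists a => //; rewrite E sgK.
- move=> a b Sa Sb; rewrite Snull // Tnull; try by apply/sgT/phiT.
  rewrite /sg -/z; case: (eqVneq z 0) => [//|_]; by rewrite eqxx.
Qed.

Local Close Scope ring_scope.

Theorem corollary11 (F : fieldType) (n : nat) :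
  infinite_type F -> (2 <= n)%N ->
  forall S T : 'M[F]_n -> Prop,
    k_maximal 2 S -> k_maximal 2 T -> semigroup_isomorphic S T.
Proof. exact: corollary11_aux. Qed.
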